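(* Let $\langle D,\epsilon,\delta\rangle$ be a comonad on $\mathcal C$ and $\lambda\colon TD\Rightarrow DT$ a distributive law of the monad $\mathcal T$ over the comonad $\langle D,\epsilon,\delta\rangle$. (a) The following are equivalent: 1. $Dq_X\circ\lambda_X\circ l_{DX}=Dq_X\circ\lambda_X\circ r_{DX}$ for all $X$ ($\lambda$ preserves $\mathcal E$). 2. There is a distributive law $\lambda'\colon T'D\Rightarrow DT'$ of $\mathcal T'$ over the comonad $\langle D,\epsilon,\delta\rangle$ such that $q$ is a morphism of distributive laws from $\lambda$ to $\lambda'$; this $\lambda'$ is then unique. (b) If $\lambda$ preserves $\mathcal E$ and $\mathcal K$ is presented by $\Sigma$ and $\mathcal E$ via a monad isomorphism $i\colon T'\Rightarrow K$, then there is a unique distributive law $\kappa$ of $\mathcal K$ over the comonad $\langle D,\epsilon,\delta\rangle$ such that $i\circ q\colon\lambda\Rightarrow\kappa$ is a morphism of distributive laws.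
   Context: Let $\mathcal C$ be a category and $\Sigma$ an endofunctor on $\mathcal C$. Let $\mathcal T=\langle T,\eta,\mu\rangle$ be the free monad over $\Sigma$. Let $\mathcal E=\langle E,l,r\rangle$ be $\mathcal T$-equations: $E$ an endofunctor, $l,r\colon E\Rightarrow T$ natural. Standing assumptions: 1. $\mathrm{Alg}(\mathcal T)$ has coequalizers. 2. The forgetful $U$ and $TU$ send regular epis to epis. 3. $EU$ sends regular epis to epis. The quotient monad $\mathcal T'=\langle T',\eta',\mu'\rangle$ is the monad induced by the left adjoint $X\mapsto\langle TX/\mathcal E,\mu_X/\mathcal E\rangle$ of the forgetful functor from the category of $\mathcal T$-algebras satisfying $\mathcal E$ (those with $\alpha\circ l_A=\alpha\circ r_A$) to $\mathcal C$. Here $\langle TX/\mathcal E,\mu_X/\mathcal E\rangle$ is the codomain of the coequalizer $s$ in $\mathrm{Alg}(\mathcal T)$ of $\mu_X\circ\mu_{TX}\circ Tl_{TX}$ and $\mu_X\circ\mu_{TX}\circ Tr_{TX}$. We set $q_X=Us_{\langle TX,\mu_X\rangle}\colon TX\to T'X$, a monad morphism. A monad $\mathcal K$ is presented by $\Sigma$ and $\mathcal E$ if there is a monad isomorphism $T'\Rightarrow K$. A distributive law of a monad $\langle K,\theta,\nu\rangle$ over a comonad $\langle D,\epsilon,\delta\rangle$ is a natural $\kappa\colon KD\Rightarrow DK$ satisfying all of: - $\kappa\circ\theta_D=D\theta$; - $\kappa\circ\nu_D=D\nu\circ\kappa_K\circ K\kappa$; - $\epsilon_K\circ\kappa=K\epsilon$;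 - $\delta_K\circ\kappa=D\kappa\circ\kappa_D\circ K\delta$. A morphism of distributive laws $\tau\colon\lambda\Rightarrow\kappa$ is a monad morphism $\tau$ with $\kappa\circ\tau_D=D\tau\circ\lambda$. *)

(* Defs.v *)
Set Implicit Arguments.
Unset Strict Implicit.

Record Category := {
  Obj :> Type;
  Hom : Obj -> Obj -> Type;
  idm : forall A, Hom A A;
  comp : forall A B D, Hom B D -> Hom A B -> Hom A D;
  comp_idl : forall A B (f : Hom A B), comp (idm B) f = f;
  comp_idr : forall A B (f : Hom A B), comp f (idm A) = f;
  comp_assoc : forall A B D F (h : Hom D F) (g : Hom B D) (f : Hom A B),
      comp h (comp g f) = comp (comp h g) f }.
Arguments Hom {c} _ _.
Arguments idm {c} A.
Arguments comp {c A B D} _ _.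
Notation "g ∘ f" := (comp g f) (at level 40, left associativity).

Definition is_epi (C : Category) (A B : C) (f : Hom A B) : Prop :=
  forall (Z : C) (u v : Hom B Z), u ∘ f = v ∘ f -> u = v.

Record FunData (C : Category) := {
  fo :> C -> C;
  fm : forall A B : C, Hom A B -> Hom (fo A) (fo B) }.
Arguments fm {C} f {A B} _.

Definition is_functor (C : Category) (F : FunData C) : Prop :=
  (forall A : C, fm F (idm A) = idm (F A)) /\
  (forall (A B D : C) (g : Hom B D) (f : Hom A B), fm F (g ∘ f) = fm F g ∘ fm F f).

Definition NatData (C : Category) (F G : FunData C) := forall X : C, Hom (F X) (G X).

Definition is_natural (C : Category) (F G : FunData C) (t : NatData F G) : Prop :=
  forall (A B : C) (f : Hom A B), t B ∘ fm F f = fm G f ∘ t A.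

Record MonadData (C : Category) := {
  mF :> FunData C;
  munit : forall X : C, Hom X (mF X);
  mmult : forall X : C, Hom (mF (mF X)) (mF X) }.
Arguments munit {C} m X.
Arguments mmult {C} m X.

Definition is_monad (C : Category) (M : MonadData C) : Prop :=
  is_functor M /\
  (forall (A B : C) (f : Hom A B), munit M B ∘ f = fm M f ∘ munit M A) /\
  (forall (A B : C) (f : Hom A B), mmult M B ∘ fm M (fm M f) = fm M f ∘ mmult M A) /\
  (forall X : C, mmult M X ∘ munit M (M X) = idm (M X)) /\
  (forall X : C, mmult M X ∘ fm M (munit M X) = idm (M X)) /\
  (forall X : C, mmult M X ∘ mmult M (M X) = mmult M X ∘ fm M (mmult M X)).

Record ComonadData (C : Category) := {
  cF :> FunData C;
  counit : forall X : C, Hom (cF X) X;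
  comult : forall X : C, Hom (cF X) (cF (cF X)) }.
Arguments counit {C} c X.
Arguments comult {C} c X.

Definition is_comonad (C : Category) (D : ComonadData C) : Prop :=
  is_functor D /\
  (forall (A B : C) (f : Hom A B), f ∘ counit D A = counit D B ∘ fm D f) /\
  (forall (A B : C) (f : Hom A B), comult D B ∘ fm D f = fm D (fm D f) ∘ comult D A) /\
  (forall X : C, counit D (D X) ∘ comult D X = idm (D X)) /\
  (forall X : C, fm D (counit D X) ∘ comult D X = idm (D X)) /\
  (forall X : C, comult D (D X) ∘ comult D X = fm D (comult D X) ∘ comult D X).

Definition is_monad_morphism (C : Category) (K K' : MonadData C)
    (tau : forall X : C, Hom (K X) (K' X)) : Prop :=
  (forall (A B : C) (f : Hom A B), tau B ∘ fm K f = fm K' f ∘ tau A) /\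
  (forall X : C, tau X ∘ munit K X = munit K' X) /\
  (forall X : C, tau X ∘ mmult K X = mmult K' X ∘ tau (K' X) ∘ fm K (tau X)).

Definition is_monad_iso (C : Category) (K K' : MonadData C)
    (tau : forall X : C, Hom (K X) (K' X)) : Prop :=
  is_monad_morphism tau /\
  (forall X : C, exists j : Hom (K' X) (K X), j ∘ tau X = idm (K X) /\ tau X ∘ j = idm (K' X)).

Definition is_distr_law (C : Category) (K : MonadData C) (D : ComonadData C)
    (k : forall X : C, Hom (K (D X)) (D (K X))) : Prop :=
  (forall (A B : C) (f : Hom A B), k B ∘ fm K (fm D f) = fm D (fm K f) ∘ k A) /\
  (forall X : C, k X ∘ munit K (D X) = fm D (munit K X)) /\
  (forall X : C, k X ∘ mmult K (D X) = fm D (mmult K X) ∘ k (K X) ∘ fm K (k X)) /\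
  (forall X : C, counit D (K X) ∘ k X = fm K (counit D X)) /\
  (forall X : C, comult D (K X) ∘ k X = fm D (k X) ∘ k (D X) ∘ fm K (comult D X)).

Definition is_distr_morphism (C : Category) (K K' : MonadData C) (D : ComonadData C)
    (lam : forall X : C, Hom (K (D X)) (D (K X)))
    (kap : forall X : C, Hom (K' (D X)) (D (K' X)))
    (tau : forall X : C, Hom (K X) (K' X)) : Prop :=
  is_monad_morphism tau /\
  (forall X : C, kap X ∘ tau (D X) = fm D (tau X) ∘ lam X).

Definition is_free_monad (C : Category) (Sig : FunData C) (T : MonadData C)
    (iota : NatData Sig T) : Prop :=
  is_natural iota /\
  forall (M : MonadData C), is_monad M ->
  forall (sigma : NatData Sig M), is_natural sigma ->
  exists tau : forall X : C, Hom (T X) (M X),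
    is_monad_morphism tau /\ (forall X : C, tau X ∘ iota X = sigma X) /\
    (forall tau' : forall X : C, Hom (T X) (M X),
        is_monad_morphism tau' -> (forall X : C, tau' X ∘ iota X = sigma X) ->
        forall X : C, tau' X = tau X).

Record Alg (C : Category) (T : MonadData C) := {
  acar : C;
  astr : Hom (T acar) acar }.
Arguments acar {C T} a.
Arguments astr {C T} a.

Definition is_alg (C : Category) (T : MonadData C) (A : Alg T) : Prop :=
  astr A ∘ munit T (acar A) = idm (acar A) /\
  astr A ∘ fm T (astr A) = astr A ∘ mmult T (acar A).

Definition is_alg_hom (C : Category) (T : MonadData C) (A B : Alg T)
    (h : Hom (acar A) (acar B)) : Prop :=
  h ∘ astr A = astr B ∘ fm T h.
Arguments is_alg_hom {C T} A B h.

Definition freeAlg (C : Category) (T : MonadData C) (X : C) : Alg T :=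
  {| acar := T X; astr := mmult T X |}.

Definition is_coequalizer (C : Category) (T : MonadData C) (A B : Alg T)
    (f g : Hom (acar A) (acar B)) (Q : Alg T) (s : Hom (acar B) (acar Q)) : Prop :=
  is_alg Q /\ is_alg_hom B Q s /\ s ∘ f = s ∘ g /\
  forall (Z : Alg T) (h : Hom (acar B) (acar Z)),
    is_alg Z -> is_alg_hom B Z h -> h ∘ f = h ∘ g ->
    exists u : Hom (acar Q) (acar Z),
      is_alg_hom Q Z u /\ u ∘ s = h /\
      (forall u' : Hom (acar Q) (acar Z), is_alg_hom Q Z u' -> u' ∘ s = h -> u' = u).
Arguments is_coequalizer {C T} A B f g Q s.

Definition has_coequalizers (C : Category) (T : MonadData C) : Prop :=
  forall (A B : Alg T) (f g : Hom (acar A) (acar B)),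
    is_alg A -> is_alg B -> is_alg_hom A B f -> is_alg_hom A B g ->
    exists (Q : Alg T) (s : Hom (acar B) (acar Q)), is_coequalizer A B f g Q s.

Definition is_regular_epi (C : Category) (T : MonadData C) (B Q : Alg T)
    (e : Hom (acar B) (acar Q)) : Prop :=
  exists (A : Alg T) (f g : Hom (acar A) (acar B)),
    is_alg A /\ is_alg_hom A B f /\ is_alg_hom A B g /\ is_coequalizer A B f g Q e.
Arguments is_regular_epi {C T} B Q e.

(** Standing assumption 2: U and TU send regular epis to epis. *)
Definition U_TU_regepi_epi (C : Category) (T : MonadData C) : Prop :=
  forall (B Q : Alg T) (e : Hom (acar B) (acar Q)),
    is_alg B -> is_alg Q -> is_alg_hom B Q e -> is_regular_epi B Q e ->
    is_epi e /\ is_epi (fm T e).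

(** Standing assumption 3: EU sends regular epis to epis. *)
Definition EU_regepi_epi (C : Category) (T : MonadData C) (E : FunData C) : Prop :=
  forall (B Q : Alg T) (e : Hom (acar B) (acar Q)),
    is_alg B -> is_alg Q -> is_alg_hom B Q e -> is_regular_epi B Q e ->
    is_epi (fm E e).

Definition quot_pair (C : Category) (T : MonadData C) (E : FunData C)
    (l : NatData E T) (X : C) : Hom (T (E (T X))) (T X) :=
  mmult T X ∘ mmult T (T X) ∘ fm T (l (T X)).

(** Data of the quotient monad: [Q X] = <T X / E, mu_X / E> with coequalizer
    [s X : T X -> T' X] (so q_X = s X); [Tfm] is the action on morphisms of the
    left adjoint X |-> Q X and [mu'] is U eps F'.  They are specified by the
    universal-arrow description of the left adjoint with unit
    eta'_X = q_X o eta_X. *)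
Definition is_quotient_data (C : Category) (T : MonadData C) (E : FunData C)
    (l r : NatData E T) (Q : forall X : C, Alg T)
    (s : forall X : C, Hom (T X) (acar (Q X)))
    (Tfm : forall X Y : C, Hom X Y -> Hom (acar (Q X)) (acar (Q Y)))
    (mu' : forall X : C, Hom (acar (Q (acar (Q X)))) (acar (Q X))) : Prop :=
  (forall X : C, is_coequalizer (freeAlg T (E (T X))) (freeAlg T X)
                   (quot_pair l X) (quot_pair r X) (Q X) (s X)) /\
  (forall (X Y : C) (f : Hom X Y),
      is_alg_hom (Q X) (Q Y) (Tfm X Y f) /\
      Tfm X Y f ∘ (s X ∘ munit T X) = (s Y ∘ munit T Y) ∘ f) /\
  (forall X : C,
      is_alg_hom (Q (acar (Q X))) (Q X) (mu' X) /\
      mu' X ∘ (s (acar (Q X)) ∘ munit T (acar (Q X))) = idm (acar (Q X))).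

Definition quotMonad (C : Category) (T : MonadData C) (Q : forall X : C, Alg T)
    (s : forall X : C, Hom (T X) (acar (Q X)))
    (Tfm : forall X Y : C, Hom X Y -> Hom (acar (Q X)) (acar (Q Y)))
    (mu' : forall X : C, Hom (acar (Q (acar (Q X)))) (acar (Q X))) : MonadData C :=
  {| mF := {| fo := fun X => acar (Q X); fm := Tfm |};
     munit := fun X => s X ∘ munit T X;
     mmult := mu' |}.

Definition preserves_eqs (C : Category) (T : MonadData C) (E : FunData C)
    (l r : NatData E T) (D : ComonadData C) (T'obj : C -> C)
    (q : forall X : C, Hom (T X) (T'obj X))
    (lam : forall X : C, Hom (T (D X)) (D (T X))) : Prop :=
  forall X : C, fm D (q X) ∘ lam X ∘ l (D X) = fm D (q X) ∘ lam X ∘ r (D X).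

Arguments is_quotient_data {C T E} l r Q s Tfm mu'.
Arguments quotMonad {C T} Q s Tfm mu'.
Arguments preserves_eqs {C T E} l r D T'obj q lam.
Arguments is_distr_law {C} K D k.
Arguments is_distr_morphism {C K K'} D lam kap tau.
Arguments is_monad_iso {C K K'} tau.
Arguments is_monad_morphism {C K K'} tau.
Arguments is_free_monad {C Sig T} iota.

(* Main.v *)
Require Import Defs.
From Stdlib Require Import Setoid Morphisms.
From Stdlib Require Import IndefiniteDescription.

Lemma postc {C : Category} {A B : C} {k1 k2 : Hom A B} :
  k1 = k2 -> forall (W : C) (z : Hom W A), k1 ∘ z = k2 ∘ z.
Proof. intros H W z; rewrite H; reflexivity. Qed.

Ltac mkr H :=
  let H2 := fresh H "r" in
  first [ pose proof (fun a b c d => postc (H a b c d)) as H2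
        | pose proof (fun a b c => postc (H a b c)) as H2
        | pose proof (fun a b => postc (H a b)) as H2
        | pose proof (fun a => postc (H a)) as H2
        | pose proof (postc H) as H2 ];
  simpl in H2; repeat setoid_rewrite <- comp_assoc in H2.

Ltac rw H Hr := first [rewrite Hr | rewrite H].
Ltac rwb H Hr := first [rewrite <- Hr | rewrite <- H].

Lemma fmap_eq {C : Category} (F : FunData C) (HF : is_functor F) {A B B' Z : C}
  (a : Hom B Z) (b : Hom A B) (c : Hom B' Z) (d : Hom A B') :
  a ∘ b = c ∘ d -> fm F a ∘ fm F b = fm F c ∘ fm F d.
Proof. destruct HF as [_ Hc]. intros H. rewrite <- !Hc, H. reflexivity. Qed.

Lemma epi_comp {C : Category} {A B Z : C} (f : Hom A B) (g : Hom B Z) :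
  is_epi f -> is_epi g -> is_epi (g ∘ f).
Proof.
  intros Hf Hg W u v H. apply Hg. apply Hf. rewrite <- !comp_assoc. exact H.
Qed.

Lemma distr_transfer (C : Category) (T K : MonadData C) (D : ComonadData C)
  (lam : forall X : C, Hom (T (D X)) (D (T X)))
  (t : forall X : C, Hom (T X) (K X))
  (kap : forall X : C, Hom (K (D X)) (D (K X))) :
  is_functor T -> is_comonad D -> is_distr_law T D lam -> is_monad_morphism t ->
  (forall X, is_epi (t X)) -> (forall X, is_epi (fm T (t X))) ->
  (forall X, kap X ∘ t (D X) = fm D (t X) ∘ lam X) ->
  is_distr_law K D kap.
Proof.
  intros [Tid Tc] HD [lnat [lunit [lmult [leps ldel]]]] [tnat [tunit tmult]] Hep HepT Hk.
  pose proof HD as [[Did Dc] [eps_nat [del_nat _]]].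
  assert (HDf : is_functor D) by (split; assumption).
  assert (DL : forall (A B B' Z : C) (a : Hom B Z) (b : Hom A B) (c : Hom B' Z) (d : Hom A B'),
     a ∘ b = c ∘ d -> fm D a ∘ fm D b = fm D c ∘ fm D d) by (intros; apply fmap_eq; assumption).
  assert (tmult' : forall X, mmult K X ∘ (t (K X) ∘ fm T (t X)) = t X ∘ mmult T X)
    by (intros; rewrite tmult, comp_assoc; reflexivity).
  assert (lmult' : forall X, fm D (mmult T X) ∘ (lam (T X) ∘ fm T (lam X)) = lam X ∘ mmult T (D X))
    by (intros; rewrite lmult, comp_assoc; reflexivity).
  assert (ldel' : forall X, fm D (lam X) ∘ (lam (D X) ∘ fm T (comult D X)) = comult D (T X) ∘ lam X)
    by (intros; rewrite ldel, comp_assoc; reflexivity).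
  mkr tnat. mkr Hk. mkr lnat. mkr tmult'. mkr lmult'. mkr ldel'. mkr eps_nat. mkr del_nat.
  Ltac nrm Tc Dc := repeat (rewrite <- comp_assoc || rewrite Tc || rewrite Dc).
  repeat split.
  - intros A B f. apply (Hep (D A)). nrm Tc Dc.
    rewrite <- tnat. rw Hk Hkr. rw lnat lnatr.
    assert (E1 := DL _ _ _ _ _ _ _ _ (tnat A B f)). mkr E1. rw E1 E1r.
    rewrite Hk. reflexivity.
  - intros X. rewrite <- (tunit (D X)), <- (tunit X). nrm Tc Dc.
    rw Hk Hkr. rewrite lunit. reflexivity.
  - intros X. apply (epi_comp _ _ (HepT (D X)) (Hep (K (D X)))). nrm Tc Dc.
    rw tmult' tmult'r. rw Hk Hkr. rwb lmult' lmult'r.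
    rwb tnat tnatr. rw Hk Hkr. rewrite <- Tc. rewrite Hk. rewrite Tc.
    rw lnat lnatr.
    assert (E1 : fm D (mmult K X) ∘ (fm D (t (K X)) ∘ fm D (fm T (t X))) = fm D (t X) ∘ fm D (mmult T X))
      by (rewrite <- !Dc, tmult'; reflexivity).
    mkr E1. rw E1 E1r. reflexivity.
  - intros X. apply (Hep (D X)). nrm Tc Dc.
    rw Hk Hkr. rwb eps_nat eps_natr. rewrite leps. rewrite <- tnat. reflexivity.
  - intros X. apply (Hep (D X)). nrm Tc Dc.
    rw Hk Hkr. rw del_nat del_natr. rewrite ldel. nrm Tc Dc.
    rewrite <- tnat. rw Hk Hkr.
    assert (E2 := DL _ _ _ _ _ _ _ _ (Hk X)). mkr E2. rw E2 E2r. reflexivity.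
Qed.

Lemma alg_hom_comp {C : Category} {T : MonadData C} (HT : is_functor T)
  (A B Z : Alg T) (g : Hom (acar A) (acar B)) (h : Hom (acar B) (acar Z)) :
  is_alg_hom A B g -> is_alg_hom B Z h -> is_alg_hom A Z (h ∘ g).
Proof.
  destruct HT as [_ Tc]. unfold is_alg_hom. intros H1 H2.
  rewrite <- comp_assoc, H1, comp_assoc, H2, <- comp_assoc, <- Tc. reflexivity.
Qed.

Lemma free_hom_unique {C : Category} {T : MonadData C} (HT : is_monad T) (X : C)
  (Z : Alg T) (h1 h2 : Hom (T X) (acar Z)) :
  is_alg_hom (freeAlg T X) Z h1 -> is_alg_hom (freeAlg T X) Z h2 ->
  h1 ∘ munit T X = h2 ∘ munit T X -> h1 = h2.
Proof.
  destruct HT as [[Tid Tc] [eta_nat [mu_nat [mul [mur ass]]]]].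
  assert (K : forall h : Hom (T X) (acar Z), is_alg_hom (freeAlg T X) Z h ->
            h = astr Z ∘ fm T (h ∘ munit T X)).
  { intros h Hh. unfold is_alg_hom in Hh; simpl in Hh.
    rewrite Tc, comp_assoc, <- Hh, <- comp_assoc, mur, comp_idr. reflexivity. }
  intros H1 H2 He. rewrite (K h1 H1), (K h2 H2), He. reflexivity.
Qed.

Lemma free_is_alg {C : Category} {T : MonadData C} (HT : is_monad T) (X : C) :
  is_alg (freeAlg T X).
Proof.
  destruct HT as [[Tid Tc] [eta_nat [mu_nat [mul [mur ass]]]]].
  split; simpl. apply mul. symmetry. apply ass.
Qed.

Lemma fm_alg_hom {C : Category} {T : MonadData C} (HT : is_monad T) (X Y : C) (f : Hom X Y) :
  is_alg_hom (freeAlg T X) (freeAlg T Y) (fm T f).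
Proof.
  destruct HT as [[Tid Tc] [eta_nat [mu_nat [mul [mur ass]]]]].
  unfold is_alg_hom; simpl. symmetry. apply mu_nat.
Qed.

Lemma mu_alg_hom {C : Category} {T : MonadData C} (HT : is_monad T) (X : C) :
  is_alg_hom (freeAlg T (T X)) (freeAlg T X) (mmult T X).
Proof.
  destruct HT as [[Tid Tc] [eta_nat [mu_nat [mul [mur ass]]]]].
  unfold is_alg_hom; simpl. apply ass.
Qed.

Lemma qp_alg_hom {C : Category} {T : MonadData C} (HT : is_monad T) (E : FunData C)
  (l : NatData E T) (X : C) :
  is_alg_hom (freeAlg T (E (T X))) (freeAlg T X) (quot_pair l X).
Proof.
  unfold quot_pair.
  apply (alg_hom_comp (proj1 HT) (freeAlg T (E (T X))) (freeAlg T (T (T X))) (freeAlg T X)).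
  - apply fm_alg_hom; assumption.
  - apply (alg_hom_comp (proj1 HT) (freeAlg T (T (T X))) (freeAlg T (T X)) (freeAlg T X));
      apply mu_alg_hom; assumption.
Qed.

Lemma qp_eta {C : Category} {T : MonadData C} (HT : is_monad T) (E : FunData C)
  (l : NatData E T) (Hl : is_natural l) (X : C) :
  quot_pair l X ∘ (munit T (E (T X)) ∘ fm E (munit T X)) = l X.
Proof.
  destruct HT as [[Tid Tc] [eta_nat [mu_nat [mul [mur ass]]]]].
  unfold quot_pair. rewrite <- !comp_assoc.
  rewrite (comp_assoc (fm T (l (T X)))), <- eta_nat.
  rewrite <- comp_assoc, (comp_assoc (mmult T (T X))), mul, comp_idl.
  rewrite Hl, comp_assoc, mur, comp_idl. reflexivity.
Qed.

Lemma mm_comp {C : Category} (T1 T2 T3 : MonadData C) (HT1 : is_functor T1)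
  (a : forall X : C, Hom (T1 X) (T2 X)) (b : forall X : C, Hom (T2 X) (T3 X)) :
  is_monad_morphism a -> is_monad_morphism b ->
  is_monad_morphism (K := T1) (K' := T3) (fun X => b X ∘ a X).
Proof.
  destruct HT1 as [_ Tc].
  intros [an [au am]] [bn [bu bm]]. split; [|split].
  - intros A B f. rewrite <- comp_assoc, an, comp_assoc, bn, <- comp_assoc. reflexivity.
  - intros X. rewrite <- comp_assoc, au, bu. reflexivity.
  - intros X. rewrite <- comp_assoc, am, !comp_assoc, bm, Tc.
    rewrite <- !comp_assoc. rewrite (comp_assoc (a (T3 X))), (an _ _ (b X)), <- comp_assoc. reflexivity.
Qed.
Theorem proposition4p12 (C : Category) (Sig : FunData C) (T : MonadData C)
  (iota : NatData Sig T) (E : FunData C) (l r : NatData E T)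
  (Q : forall X : C, Alg T) (s : forall X : C, Hom (T X) (acar (Q X)))
  (Tfm : forall X Y : C, Hom X Y -> Hom (acar (Q X)) (acar (Q Y)))
  (mu' : forall X : C, Hom (acar (Q (acar (Q X)))) (acar (Q X)))
  (D : ComonadData C) (lam : forall X : C, Hom (T (D X)) (D (T X))) :
  is_functor Sig -> is_monad T -> is_free_monad iota ->
  is_functor E -> is_natural l -> is_natural r ->
  has_coequalizers T -> U_TU_regepi_epi T -> EU_regepi_epi T E ->
  is_quotient_data l r Q s Tfm mu' ->
  is_comonad D -> is_distr_law T D lam ->
  (* (a) *)
  ((preserves_eqs l r D (fun X => acar (Q X)) s lam <->
      exists lam' : forall X : C, Hom (acar (Q (D X))) (D (acar (Q X))),
        is_distr_law (quotMonad Q s Tfm mu') D lam' /\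
        is_distr_morphism (K := T) (K' := quotMonad Q s Tfm mu') D lam lam' s) /\
   (forall lam1 lam2 : forall X : C, Hom (acar (Q (D X))) (D (acar (Q X))),
        is_distr_law (quotMonad Q s Tfm mu') D lam1 ->
        is_distr_morphism (K := T) (K' := quotMonad Q s Tfm mu') D lam lam1 s ->
        is_distr_law (quotMonad Q s Tfm mu') D lam2 ->
        is_distr_morphism (K := T) (K' := quotMonad Q s Tfm mu') D lam lam2 s ->
        forall X : C, lam1 X = lam2 X)) /\
  (* (b) *)
  (preserves_eqs l r D (fun X => acar (Q X)) s lam ->
   forall (K : MonadData C) (i : forall X : C, Hom (acar (Q X)) (K X)),
     is_monad K -> is_monad_iso (K := quotMonad Q s Tfm mu') (K' := K) i ->
     exists kap : forall X : C, Hom (K (D X)) (D (K X)),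
       is_distr_law K D kap /\
       is_distr_morphism (K := T) (K' := K) D lam kap (fun X => i X ∘ s X) /\
       (forall kap' : forall X : C, Hom (K (D X)) (D (K X)),
          is_distr_law K D kap' ->
          is_distr_morphism (K := T) (K' := K) D lam kap' (fun X => i X ∘ s X) ->
          forall X : C, kap' X = kap X)).
Proof.
  intros HSig HT Hfree HE Hl Hr Hcoeq HU HEU [Hcq [HTfm Hmu']] HD Hlam.
  pose proof HT as [[Tid Tc] [eta_nat [mu_nat [mul [mur ass]]]]].
  pose proof HD as [[Did Dc] [eps_nat [del_nat _]]].
  assert (HQalg : forall X, is_alg (Q X)) by (intros X; apply (Hcq X)).
  assert (Hsh : forall X, is_alg_hom (freeAlg T X) (Q X) (s X)) by (intros X; apply (Hcq X)).
  assert (Fepi : forall X, is_epi (s X) /\ is_epi (fm T (s X))).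
  { intros X. apply (HU (freeAlg T X) (Q X)); [apply free_is_alg; exact HT | apply HQalg | apply Hsh |].
    exists (freeAlg T (E (T X))), (quot_pair l X), (quot_pair r X).
    split; [apply free_is_alg; exact HT|]. split; [apply qp_alg_hom; exact HT|].
    split; [apply qp_alg_hom; exact HT|]. apply Hcq. }
  assert (Fnat : forall X Y (f : Hom X Y), Tfm X Y f ∘ s X = s Y ∘ fm T f).
  { intros X Y f. apply (free_hom_unique HT X (Q Y)).
    - apply (alg_hom_comp (proj1 HT) (freeAlg T X) (Q X) (Q Y)); [apply Hsh | apply HTfm].
    - apply (alg_hom_comp (proj1 HT) (freeAlg T X) (freeAlg T Y) (Q Y));
        [apply fm_alg_hom; exact HT | apply Hsh].
    - rewrite <- comp_assoc, (proj2 (HTfm X Y f)), <- !comp_assoc, <- eta_nat. reflexivity. }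
  assert (Hmu2 : forall X, mu' X ∘ (s (acar (Q X)) ∘ munit T (acar (Q X))) = idm _)
    by (intros X; apply Hmu').
  assert (Fmu : forall X, mu' X ∘ s (acar (Q X)) ∘ fm T (s X) = s X ∘ mmult T X).
  { intros X. apply (free_hom_unique HT (T X) (Q X)).
    - apply (alg_hom_comp (proj1 HT) (freeAlg T (T X)) (freeAlg T (acar (Q X))) (Q X));
        [apply fm_alg_hom; exact HT|].
      apply (alg_hom_comp (proj1 HT) (freeAlg T (acar (Q X))) (Q (acar (Q X))) (Q X));
        [apply Hsh | apply Hmu'].
    - apply (alg_hom_comp (proj1 HT) (freeAlg T (T X)) (freeAlg T X) (Q X));
        [apply mu_alg_hom; exact HT | apply Hsh].
    - rewrite <- !comp_assoc, <- eta_nat, (comp_assoc (s _)), (comp_assoc (mu' X)), Hmu2, comp_idl, mul, comp_idr.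
      reflexivity. }
  assert (Fmm : is_monad_morphism (K := T) (K' := quotMonad Q s Tfm mu') s).
  { split; [|split].
    - intros A B f. simpl. symmetry. apply Fnat.
    - intros X. reflexivity.
    - intros X. simpl. symmetry. apply Fmu. }
  assert (Fsl : forall X, s X ∘ l X = s X ∘ r X).
  { intros X. rewrite <- (qp_eta HT E l Hl X), <- (qp_eta HT E r Hr X).
    rewrite !comp_assoc. destruct (Hcq X) as [_ [_ [Hsq _]]]. cbn [acar freeAlg] in Hsq. rewrite Hsq. reflexivity. }
  assert (A12 : preserves_eqs l r D (fun X => acar (Q X)) s lam ->
      exists lam' : forall X : C, Hom (acar (Q (D X))) (D (acar (Q X))),
        is_distr_law (quotMonad Q s Tfm mu') D lam' /\
        is_distr_morphism (K := T) (K' := quotMonad Q s Tfm mu') D lam lam' s).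
  { intros Hpres.
    pose proof Hlam as [lnat [lunit [lmult [leps ldel]]]].
    pose proof HE as [Eid Ec].
    assert (lmult' : forall X, fm D (mmult T X) ∘ (lam (T X) ∘ fm T (lam X)) = lam X ∘ mmult T (D X))
      by (intros; rewrite lmult, comp_assoc; reflexivity).
    mkr lnat. mkr lmult'. mkr mu_nat.
    assert (Hex : forall X, { u : Hom (acar (Q (D X))) (D (acar (Q X))) |
                              u ∘ s (D X) = fm D (s X) ∘ lam X }).
    { intros X. apply constructive_indefinite_description.
      destruct (Hcq (D X)) as [_ [_ [_ Hun]]].
      pose proof (HQalg X) as [Qa1 Qa2].
      pose proof (Hsh X) as Hs. unfold is_alg_hom in Hs. cbn [acar astr freeAlg] in Hs.
      assert (HZ : is_alg ({| acar := D (acar (Q X));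
                              astr := fm D (astr (Q X)) ∘ lam (acar (Q X)) |} : Alg T)).
      { split; cbn [acar astr].
        - rewrite <- comp_assoc, lunit, <- Dc, Qa1, Did. reflexivity.
        - nrm Tc Dc. rewrite lmult. nrm Tc Dc. rw lnat lnatr.
          assert (E1 := fmap_eq D (proj1 HD) _ _ _ _ Qa2). mkr E1. rw E1 E1r. reflexivity. }
      assert (Hh : fm D (s X) ∘ lam X ∘ mmult T (D X) =
                   (fm D (astr (Q X)) ∘ lam (acar (Q X))) ∘ fm T (fm D (s X) ∘ lam X)).
      { nrm Tc Dc. rwb lmult' lmult'r. rw lnat lnatr.
        assert (E1 := fmap_eq D (proj1 HD) _ _ _ _ Hs). mkr E1. rw E1 E1r. reflexivity. }
      assert (EQ : astr (Q X) ∘ fm T (s X) = mu' X ∘ (Tfm _ _ (s X) ∘ s (T X))).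
      { rewrite <- Hs, Fnat, comp_assoc, Fmu. reflexivity. }
      assert (EQD : fm D (astr (Q X)) ∘ fm D (fm T (s X)) =
                    fm D (mu' X) ∘ (fm D (Tfm _ _ (s X)) ∘ fm D (s (T X))))
        by (rewrite <- !Dc, EQ; reflexivity).
      mkr EQD.
      assert (K1 : forall n : NatData E T, is_natural n ->
        (fm D (astr (Q X)) ∘ lam (acar (Q X))) ∘ (fm T (fm D (s X) ∘ lam X) ∘ n (T (D X))) =
        fm D (mu' X ∘ Tfm _ _ (s X)) ∘ ((fm D (s (T X)) ∘ lam (T X) ∘ n (D (T X))) ∘ fm E (lam X))).
      { intros n Hn. mkr Hn. rewrite <- Hn, Ec. nrm Tc Dc.
        rw Hn Hnr. rw lnat lnatr. rw EQD EQDr. reflexivity. }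
      assert (K2 : forall n : NatData E T, is_natural n ->
        (fm D (s X) ∘ lam X) ∘ quot_pair n (D X) =
        (fm D (astr (Q X)) ∘ lam (acar (Q X))) ∘ fm T ((fm D (astr (Q X)) ∘ lam (acar (Q X))) ∘ (fm T (fm D (s X) ∘ lam X) ∘ n (T (D X))))).
      { intros n Hn. unfold quot_pair. rewrite !comp_assoc, Hh. rewrite <- !comp_assoc.
        rewrite (comp_assoc (fm T (fm D (s X) ∘ lam X))), <- mu_nat.
        rewrite !comp_assoc. destruct HZ as [_ HZ2]. cbn [acar astr] in HZ2.
        rewrite <- HZ2. nrm Tc Dc. reflexivity. }
      destruct (Hun ({| acar := D (acar (Q X)); astr := fm D (astr (Q X)) ∘ lam (acar (Q X)) |} : Alg T) (fm D (s X) ∘ lam X) HZ) as [u [_ [Hu _]]].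
      - unfold is_alg_hom. cbn [acar astr freeAlg]. exact Hh.
      - cbn [acar freeAlg]. rewrite (K2 l Hl), (K2 r Hr), (K1 l Hl), (K1 r Hr), (Hpres (T X)).
        reflexivity.
      - exists u. exact Hu. }
    exists (fun X => proj1_sig (Hex X)).
    assert (Hk : forall X, proj1_sig (Hex X) ∘ s (D X) = fm D (s X) ∘ lam X)
      by (intros X; exact (proj2_sig (Hex X))).
    split; [| split; [exact Fmm | exact Hk]].
    apply (distr_transfer _ T (quotMonad Q s Tfm mu') D lam s); try assumption.
    - exact (proj1 HT).
    - intros X; apply Fepi.
    - intros X; apply Fepi. }

  assert (retr_epi : forall (A B : C) (f : Hom A B) (j : Hom B A), f ∘ j = idm B -> is_epi f).
  { intros A B f j H Z u v E0. rewrite <- (comp_idr u), <- (comp_idr v), <- H, !comp_assoc, E0.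
    reflexivity. }
  split; [split; [split|] |].
  - exact A12.
  - intros [lam' [_ [_ Hk]]]. unfold preserves_eqs. intros X. cbv beta.
    assert (Hk2 : lam' X ∘ s (D X) = fm D (s X) ∘ lam X) by exact (Hk X).
    rewrite <- Hk2, <- !comp_assoc, Fsl. reflexivity.
  - intros lam1 lam2 _ [_ H1] _ [_ H2] X. apply (proj1 (Fepi (D X))). rewrite H1, H2. reflexivity.
  - intros Hpres K i HK [Hi Hinv].
    destruct (A12 Hpres) as [lam' [Hl' [_ Hk0]]].
    assert (Hk' : forall X, lam' X ∘ s (D X) = fm D (s X) ∘ lam X) by exact Hk0.
    assert (Hj : forall X, {j : Hom (K X) (acar (Q X)) | j ∘ i X = idm _ /\ i X ∘ j = idm _})
      by (intros X; apply constructive_indefinite_description; apply Hinv).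
    assert (Hkt : forall X, (fm D (i X) ∘ lam' X ∘ proj1_sig (Hj (D X))) ∘ (i (D X) ∘ s (D X))
                            = fm D (i X ∘ s X) ∘ lam X).
    { intros X. destruct (Hj (D X)) as [j [Hji Hij]]. simpl.
      rewrite <- !comp_assoc, (comp_assoc j), Hji, comp_idl, Hk', Dc, !comp_assoc. reflexivity. }
    assert (Mt := mm_comp T (quotMonad Q s Tfm mu') K (proj1 HT) s i Fmm Hi).
    assert (Hept : forall X, is_epi (i X ∘ s X)).
    { intros X. apply epi_comp; [apply Fepi|].
      destruct (Hj X) as [j [Hji Hij]]. exact (retr_epi _ _ _ j Hij). }
    assert (HepTt : forall X, is_epi (fm T (i X ∘ s X))).
    { intros X. rewrite Tc. apply epi_comp; [apply Fepi|].
      destruct (Hj X) as [j [Hji Hij]]. apply (retr_epi _ _ _ (fm T j)).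
      rewrite <- Tc, Hij. apply Tid. }
    exists (fun X => fm D (i X) ∘ lam' X ∘ proj1_sig (Hj (D X))).
    split; [| split; [split; [exact Mt | exact Hkt] |]].
    + apply (distr_transfer _ T K D lam (fun X => i X ∘ s X)); try assumption.
      exact (proj1 HT).
    + intros kap' _ [_ H'] X. cbv beta in H'. apply (Hept (D X)). rewrite H', Hkt. reflexivity.
Qed.
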